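(* Consider the one-dimensional conservative forward Euler finite difference scheme $\mathbf{u}_i^{n+1}=\mathbf{u}_i^n-\lambda(\mathbf{f}_{i+1/2}-\mathbf{f}_{i-1/2})$, $\lambda=\Delta t/\Delta x$, with numerical fluxes of the form $\mathbf{f}_{i+1/2}=\alpha_{i+1/2}(\mathbf{w}^+_{i+1/2}-\mathbf{w}^-_{i+1/2})$, where $\mathbf{w}^\pm_{i+1/2}\in\mathbb{R}^6$ are given interface values and $\alpha_{i+1/2}=\max\{\alpha(\mathbf{u}_i^n),\alpha(\mathbf{u}_{i+1}^n)\}$. Let $\mathbf{w}_i^\pm=\mathbf{w}^\pm(\mathbf{u}_i^n)$ and $\mathbf{q}_i^{+,*}=\frac{1}{1-\hat w_N}(\mathbf{w}_i^+-\hat w_N\mathbf{w}^+_{i+1/2})$, $\mathbf{q}_i^{-,*}=\frac{1}{1-\hat w_1}(\mathbf{w}_i^--\hat w_1\mathbf{w}^-_{i-1/2})$. Assume that for all $i$: (1) $\mathbf{u}_i^n\in\mathbb{U}_{\mathrm{ad}}$; (2) $\mathbf{q}_i^{\pm,*}\in\mathbb{U}_{\mathrm{ad}}$ and $\mathbf{w}^\pm_{i+1/2}\in\mathbb{U}_{\mathrm{ad}}$. Then the scheme is positivity preserving, i.e. $\mathbf{u}_i^{n+1}\in\mathbb{U}_{\mathrm{ad}}$ for all $i$, provided the CFL condition $\frac{\alpha\,\Delta t}{\Delta x}\le\hat w_1$ holds, where $\alpha=\max_i\alpha(\mathbf{u}_i^n)$.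
   Context: Ten-Moment equations in 1-D: conservative variable $\mathbf{u}=(\rho,\rho v_1,\rho v_2,E_{11},E_{12},E_{22})^\top$; pressure components $p_{11}=2E_{11}-\rho v_1^2$, $p_{12}=2E_{12}-\rho v_1v_2$, $p_{22}=2E_{22}-\rho v_2^2$; $\mathbb{U}_{\mathrm{ad}}=\{\mathbf{u}:\rho>0,\ \mathbf{p}\text{ positive definite}\}$. Flux $\mathbf{f}(\mathbf{u})=\big(\rho v_1,\ \rho v_1^2+p_{11},\ \rho v_1v_2+p_{12},\ (E_{11}+p_{11})v_1,\ E_{12}v_1+\tfrac12(p_{11}v_2+p_{12}v_1),\ E_{22}v_1+p_{12}v_2\big)^\top$; wave speed $\alpha(\mathbf{u})=|v_1|+\sqrt{3p_{11}/\rho}$; $\mathbf{w}^\pm(\mathbf{u})=\frac12(\mathbf{u}\pm\mathbf{f}(\mathbf{u})/\alpha(\mathbf{u}))$. Uniform mesh with nodes $x_i$, spacing $\Delta x$, interfaces $x_{i+1/2}$. $\hat w_1,\dots,\hat w_N$ are the weights (normalized to sum to $1$ on a cell) of the $N$-point Gauss–Lobatto quadrature rule, $N\ge4$, so that $\hat w_1=\hat w_N$ (for $N=4$, $\hat w_1=1/12$). In the paper $\mathbf{w}^\pm_{i+1/2}=\pm\mathbf{f}^\pm_{i+1/2}/\alpha_{i+1/2}$, where $\mathbf{f}^\pm_{i+1/2}$ are WENO reconstructions of the Lax–Friedrichs split fluxes $\frac12(\mathbf{f}(\mathbf{u})\pm\alpha_{i+1/2}\mathbf{u})$, possibly modified by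 a scaling limiter. *)

(* Defs.v *)
From HB Require Import structures.
From mathcomp Require Import all_boot all_order all_algebra.
Set Implicit Arguments. Unset Strict Implicit. Unset Printing Implicit Defensive.
Import Order.TTheory GRing.Theory Num.Theory.
Local Open Scope ring_scope.

Section TenMoment.
Variable R : rcfType.

(* conservative variable u = (rho, rho v1, rho v2, E11, E12, E22) as a row vector *)
Definition comp (k : nat) (u : 'rV[R]_6) : R := u ord0 (inord k).
Definition rho (u : 'rV[R]_6) := comp 0 u.
Definition v1 (u : 'rV[R]_6) := comp 1 u / rho u.
Definition v2 (u : 'rV[R]_6) := comp 2 u / rho u.
Definition E11 (u : 'rV[R]_6) := comp 3 u.
Definition E12 (u : 'rV[R]_6) := comp 4 u.
Definition E22 (u : 'rV[R]_6) := comp 5 u.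
Definition p11 (u : 'rV[R]_6) := 2 * E11 u - rho u * v1 u ^+ 2.
Definition p12 (u : 'rV[R]_6) := 2 * E12 u - rho u * v1 u * v2 u.
Definition p22 (u : 'rV[R]_6) := 2 * E22 u - rho u * v2 u ^+ 2.

Definition pmat (u : 'rV[R]_6) : 'M[R]_2 :=
  \matrix_(i < 2, j < 2)
    (if (i : nat) == 0%N then (if (j : nat) == 0%N then p11 u else p12 u)
     else (if (j : nat) == 0%N then p12 u else p22 u)).

Definition posdef n (P : 'M[R]_n) : Prop :=
  forall x : 'cV[R]_n, x != 0 -> 0 < (x^T *m P *m x) ord0 ord0.

Definition admissible (u : 'rV[R]_6) : Prop := 0 < rho u /\ posdef (pmat u).

Definition flux (u : 'rV[R]_6) : 'rV[R]_6 :=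
  \row_(k < 6)
   [:: rho u * v1 u;
       rho u * v1 u ^+ 2 + p11 u;
       rho u * v1 u * v2 u + p12 u;
       (E11 u + p11 u) * v1 u;
       E12 u * v1 u + 2^-1 * (p11 u * v2 u + p12 u * v1 u);
       E22 u * v1 u + p12 u * v2 u ]`_k.

Definition alpha (u : 'rV[R]_6) : R := `|v1 u| + Num.sqrt (3 * p11 u / rho u).

Definition wplus (u : 'rV[R]_6) : 'rV[R]_6 := 2^-1 *: (u + (alpha u)^-1 *: flux u).
Definition wminus (u : 'rV[R]_6) : 'rV[R]_6 := 2^-1 *: (u - (alpha u)^-1 *: flux u).

End TenMoment.

(* Endpoint weights of the N-point Gauss-Lobatto rule normalized to sum 1 on a
   cell: hat w_1 = hat w_N = 1/(N(N-1))  (e.g. 1/12 for N = 4). *)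
Definition gl_w1 (R : rcfType) (N : nat) : R := ((N * (N - 1))%N%:R)^-1.
Definition gl_wN (R : rcfType) (N : nat) : R := ((N * (N - 1))%N%:R)^-1.

(* One step of the scheme on the infinite uniform mesh, nodes indexed by int.
   wp i, wm i stand for w^+_{i+1/2}, w^-_{i+1/2}. *)
Definition alpha_half (R : rcfType) (u : int -> 'rV[R]_6) (i : int) : R :=
  Num.max (alpha (u i)) (alpha (u (i + 1))).
Definition num_flux (R : rcfType) (u wp wm : int -> 'rV[R]_6) (i : int) : 'rV[R]_6 :=
  alpha_half u i *: (wp i - wm i).
Definition euler_step (R : rcfType) (lam : R) (u wp wm : int -> 'rV[R]_6) (i : int)
  : 'rV[R]_6 :=
  u i - lam *: (num_flux u wp wm i - num_flux u wp wm (i - 1)).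

Definition qplus (R : rcfType) (N : nat) (u wp : int -> 'rV[R]_6) (i : int) : 'rV[R]_6 :=
  (1 - gl_wN R N)^-1 *: (wplus (u i) - gl_wN R N *: wp i).
Definition qminus (R : rcfType) (N : nat) (u wm : int -> 'rV[R]_6) (i : int) : 'rV[R]_6 :=
  (1 - gl_w1 R N)^-1 *: (wminus (u i) - gl_w1 R N *: wm (i - 1)).

(* Main.v *)
Require Import Defs.
From HB Require Import structures.
From mathcomp Require Import all_boot all_order all_algebra.
From mathcomp Require Import ring lra.
Import Order.TTheory GRing.Theory Num.Theory.
Local Open Scope ring_scope.
Section S.
Variable R : rcfType.
Lemma qf (u : 'rV[R]_6) (x : 'cV[R]_2) :
  (x^T  *m pmat u  *m x) ord0 ord0 =
  p11 u  *  x ord0 ord0 ^+ 2 + 2  *  p12 u  *  x ord0 ord0  *  x (lift ord0 ord0) ord0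
  + p22 u  *  x (lift ord0 ord0) ord0 ^+ 2.
Proof.
rewrite !mxE !big_ord_recl !big_ord0 /= !mxE !big_ord_recl !big_ord0 /= !mxE /=.
ring.
Qed.

Definition Qc (u : 'rV[R]_6) a b := Defs.comp 0 u  *  (2 * (Defs.comp 3 u  *  a^+2 + 2 * Defs.comp 4 u * a * b + Defs.comp 5 u * b^+2)) - (Defs.comp 1 u  *  a + Defs.comp 2 u  *  b)^+2.

Lemma rhoQ u a b : 0 < rho u ->
  rho u  *  (p11 u * a^+2 + 2 * p12 u * a * b + p22 u * b^+2) = Qc u a b.
Proof.
move=> h; rewrite /Qc /p11 /p12 /p22 /v1 /v2 /E11 /E12 /E22.
move: h; rewrite /rho => h. field. by rewrite gt_eqF.
Qed.

Lemma adm_iff u : admissible u <->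
  0 < Defs.comp 0 u /\ forall a b, a != 0 \/ b != 0 -> 0 < Qc u a b.
Proof.
split.
- case=> hr hp; split => // a b hab.
  pose x : 'cV[R]_2 := \col_(i<2) (if (i:nat)==0%N then a else b).
  have hx : x != 0.
    apply/negP => /eqP h.
    have h0 := congr1 (fun m : 'cV[R]_2 => m ord0 ord0) h.
    have h1 := congr1 (fun m : 'cV[R]_2 => m (lift ord0 ord0) ord0) h.
    move: h0 h1; rewrite !mxE /= => h0 h1.
    by case: hab; rewrite ?h0 ?h1 eqxx.
  have := hp x hx; rewrite qf !mxE /= -(rhoQ u _ _ hr) => hq.
  exact: mulr_gt0.
- case=> hr hq; split => // x hx.
  have hr' : 0 < rho u by [].
  rewrite qf -(pmulr_rgt0 _ hr') rhoQ //; apply: hq.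
  case: (boolP (x ord0 ord0 != 0)) => h0; first by left.
  case: (boolP (x (lift ord0 ord0) ord0 != 0)) => h1; first by right.
  move: h0 h1; rewrite !negbK => /eqP h0 /eqP h1.
  exfalso; move/negP: hx; apply; apply/eqP/matrixP => i j.
  rewrite mxE (ord1 j).
  case: i => [[|[|k]] Hi].
  + by rewrite -h0; congr (x _ _); apply: val_inj.
  + by rewrite -h1; congr (x _ _); apply: val_inj.
  + by [].
Qed.
Lemma compD k (x y : 'rV[R]_6) : Defs.comp k (x + y) = Defs.comp k x + Defs.comp k y.
Proof. by rewrite /Defs.comp mxE. Qed.
Lemma compZ k c (x : 'rV[R]_6) : Defs.comp k (c *: x) = c * Defs.comp k x.
Proof. by rewrite /Defs.comp mxE. Qed.

Lemma key (r r' L L' m m' : R) : 0 < r -> 0 < r' -> 0 < r * L - m ^+ 2 ->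
  0 < r' * L' - m' ^+ 2 -> 0 < (r + r') * (L + L') - (m + m') ^+ 2.
Proof.
move=> h1 h2 h3 h4.
have e : r * r' * (r * L' + r' * L - 2 * m * m') =
  r ^+ 2 * (r' * L' - m' ^+ 2) + r' ^+ 2 * (r * L - m ^+ 2) + (r * m' - r' * m) ^+ 2 by ring.
have h5 : 0 < r * r' * (r * L' + r' * L - 2 * m * m').
  rewrite e; apply: ltr_wpDr; first exact: sqr_ge0.
  apply: addr_gt0; apply: mulr_gt0 => //; exact: exprn_gt0.
have h6 : 0 < r * L' + r' * L - 2 * m * m'.
  by move: h5; rewrite pmulr_rgt0 // mulr_gt0.
have -> : (r + r') * (L + L') - (m + m') ^+ 2 =
  (r * L - m ^+ 2) + (r' * L' - m' ^+ 2) + (r * L' + r' * L - 2 * m * m') by ring.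
by apply: addr_gt0 => //; apply: addr_gt0.
Qed.

Lemma adm_add (x y : 'rV[R]_6) : admissible x -> admissible y -> admissible (x + y).
Proof.
rewrite !adm_iff => -[hx qx] [hy qy]; split.
  by rewrite compD addr_gt0.
move=> a b hab; have := @key _ _ _ _ _ _ hx hy (qx a b hab) (qy a b hab).
by rewrite /Qc !compD; congr (0 < _); ring.
Qed.

Lemma adm_scale (c : R) (x : 'rV[R]_6) : 0 < c -> admissible x -> admissible (c *: x).
Proof.
move=> hc; rewrite !adm_iff => -[hx qx]; split.
  by rewrite compZ mulr_gt0.
move=> a b hab; have := qx a b hab.
have -> : Qc (c *: x) a b = c ^+ 2 * Qc x a b by rewrite /Qc !compZ; ring.
by move=> h; rewrite mulr_gt0 // exprn_gt0.
Qed.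

Lemma adm_comb (x : 'rV[R]_6) (c : R) y : admissible x -> 0 <= c -> admissible y -> admissible (x + c *: y).
Proof.
move=> hx hc hy; have [->|hc'] := eqVneq c 0; first by rewrite scale0r addr0.
by apply: adm_add => //; apply: adm_scale => //; rewrite lt_def hc' hc.
Qed.

Lemma alpha_ge0 (x : 'rV[R]_6) : 0 <= alpha x.
Proof. by rewrite /alpha addr_ge0 // sqrtr_ge0. Qed.
End S.

From mathcomp Require Import zify.

Theorem theorem3 (R : rcfType) (N : nat) (dt dx : R)
    (u wp wm : int -> 'rV[R]_6) (amax : R) :
  (4 <= N)%N -> 0 < dt -> 0 < dx ->
  (forall i, admissible (u i)) ->
  (forall i, admissible (qplus N u wp i) /\ admissible (qminus N u wm i)) ->
  (forall i, admissible (wp i) /\ admissible (wm i)) ->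
  (* amax = max_i alpha(u_i) *)
  (forall i, alpha (u i) <= amax) -> (exists i, alpha (u i) = amax) ->
  amax * dt / dx <= gl_w1 R N ->
  forall i, admissible (euler_step (dt / dx) u wp wm i).
Proof.
move=> hN hdt hdx hu hq hw hmax _ hcfl i.
set lam := dt / dx.
set w := gl_w1 R N.
have hlam : 0 < lam by rewrite divr_gt0.
have hw1 : w < 1.
  rewrite /w /gl_w1 invf_lt1 ?ltr0n ?ltr1n; lia.
have hNw : gl_wN R N = w by [].
set a1 := alpha_half u i.
set a0 := alpha_half u (i - 1).
have ha : forall j, 0 <= alpha_half u j /\ lam * alpha_half u j <= w.
  move=> j; split.
    by rewrite /alpha_half le_max alpha_ge0.
  apply: le_trans hcfl.
  have -> : amax * dt / dx = lam * amax by rewrite /lam; ring.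
  apply: ler_wpM2l; first exact: ltW.
  by rewrite /alpha_half ge_max !hmax.
have e : euler_step lam u wp wm i =
  (1 - w) *: qplus N u wp i + (1 - w) *: qminus N u wm i
  + (w - lam * a1) *: wp i + (lam * a1) *: wm i
  + (lam * a0) *: wp (i - 1) + (w - lam * a0) *: wm (i - 1).
  rewrite /qplus /qminus hNw !scalerA mulfV ?subr_eq0 ?(gt_eqF hw1) // !scale1r.
  rewrite /euler_step /num_flux -/a1 -/a0 /wplus /wminus.
  move: (flux (u i)) (alpha (u i))^-1 => F ia. apply/rowP => k; rewrite !mxE.

  rewrite -/w; move: (u i 0 k) (wp i 0 k) (wm i 0 k) (wp (i-1) 0 k) (wm (i-1) 0 k) (F 0 k) => x1 x2 x3 x4 x5 x6. clearbody lam w a1 a0. by field.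
rewrite e.
have [p0 l0] := ha (i - 1).
have [p1 l1] := ha i.
have hw1' : 0 < 1 - w by rewrite subr_gt0.
apply: adm_comb; last by case: (hw (i - 1)).
  apply: adm_comb; last by case: (hw (i - 1)).
    apply: adm_comb; last by case: (hw i).
      apply: adm_comb; last by case: (hw i).
        apply: adm_comb; last by case: (hq i).
          by apply: adm_scale => //; case: (hq i).
        exact: ltW.
      by rewrite subr_ge0.
    by rewrite mulr_ge0 // ltW.
  by rewrite mulr_ge0 // ltW.
by rewrite subr_ge0.
Qed.
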